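(* Let $\Omega\subseteq\mathbb R^m$ be a domain star-like with respect to the origin, and let $h=f_1+\underline x f_2$ in $\Omega$, where $f_1,f_2$ are left monogenic functions in $\Omega$ (so $h$ is harmonic). Then $\partial_{\underline x}h=-mf_2-2\mathrm E_{\underline x}f_2$, and $h$ is inframonogenic in $\Omega$ if and only if $mf_2+2\mathrm E_{\underline x}f_2$ is right monogenic in $\Omega$. In particular, if $h$ is an $\mathbb R_{0,m}$-valued homogeneous polynomial of degree $k\ge1$ on $\mathbb R^m$ which is both harmonic and inframonogenic, then $h=f_1+\underline x f_2$ where $f_1$ is a left monogenic homogeneous polynomial of degree $k$ and $f_2$ is a two-sided monogenic homogeneous polynomial of degree $k-1$.
   Context: $\mathbb R_{0,m}$ is the $2^m$-dimensional real Clifford algebra generated by the orthonormal basis $e_1,\dots,e_m$ of $\mathbb R^m$ with relations $e_je_k+e_ke_j=-2\delta_{jk}$. A point of $\mathbb R^m$ is identified with $\underline x=\sum_j x_je_j$. The Dirac operator $\partial_{\underline x}=\sum_j e_j\partial_{x_j}$ acts from the left, $\partial_{\underline x}f=\sum_j e_j\partial_{x_j}f$, or from the right, $f\partial_{\underline x}=\sum_j(\partial_{x_j}f)e_j$. Left (right) monogenic: $\partial_{\underline x}f=0$ ($f\partial_{\underline x}=0$); two-sided monogenic: both. $f\in\mathcal C^2$ is inframonogenic if $\partial_{\underline x}f\partial_{\underline x}=\sum_{i,j}e_i(\partial_{x_i}\partial_{x_j}f)e_j=0$. $\mathrm E_{\underline x}=\sum_j x_j\partial_{x_j}$ is the Euler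 operator. *)

(* Defs.v *)
From HB Require Import structures.
From Stdlib Require Import Reals ClassicalEpsilon.
From mathcomp Require Import all_boot.
Set Implicit Arguments. Unset Strict Implicit. Unset Printing Implicit Defensive.

Local Open Scope R_scope.

Lemma Rplus_assoc' : associative Rplus.
Proof. by move=> a b c; rewrite Rplus_assoc. Qed.
Lemma Rmult_assoc' : associative Rmult.
Proof. by move=> a b c; rewrite Rmult_assoc. Qed.
HB.instance Definition _ :=
  Monoid.isComLaw.Build R R0 Rplus Rplus_assoc' Rplus_comm Rplus_0_l.
HB.instance Definition _ :=
  Monoid.isComLaw.Build R R1 Rmult Rmult_assoc' Rmult_comm Rmult_1_l.

(* An element is given by its coordinates on the basis blades e_A, A ⊆ {0..m-1},
   where e_A = e_{a_1} ... e_{a_r} for a_1 < ... < a_r (e_∅ = 1). *)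
Definition Cl (m : nat) := {set 'I_m} -> R.

Definition cl_zero m : Cl m := fun _ => 0.
Definition cl_add m (a b : Cl m) : Cl m := fun A => a A + b A.
Definition cl_scale m (r : R) (a : Cl m) : Cl m := fun A => r * a A.

(* sign in e_A e_B = blade_sign A B * e_{A Δ B}, using e_j e_k + e_k e_j = -2 δ_jk *)
Definition blade_sign m (A B : {set 'I_m}) : R :=
  (-1) ^ (#|[set p : 'I_m * 'I_m | [&& p.1 \in A, p.2 \in B & (p.2 < p.1)%N]]|
          + #|A :&: B|).

Definition cl_mul m (a b : Cl m) : Cl m := fun C =>
  \big[Rplus/0]_(A : {set 'I_m})
    \big[Rplus/0]_(B : {set 'I_m} | (A :\: B) :|: (B :\: A) == C)
      (blade_sign A B * a A * b B).

Definition cl_e m (j : 'I_m) : Cl m := fun A => if A == [set j] then 1 else 0.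

Definition pt (m : nat) := 'I_m -> R.
Definition origin m : pt m := fun _ => 0.

Definition vec m (x : pt m) : Cl m := fun A =>
  \big[Rplus/0]_(j : 'I_m) (x j * cl_e j A).

Definition upd m (x : pt m) (j : 'I_m) (t : R) : pt m :=
  fun i => if i == j then t else x i.

Definition deriv_at (g : R -> R) (t : R) : R :=
  epsilon (inhabits 0) (fun l => derivable_pt_lim g t l).

Definition has_pd m (f : pt m -> Cl m) (j : 'I_m) (x : pt m) : Prop :=
  forall A, exists l, derivable_pt_lim (fun t => f (upd x j t) A) (x j) l.

Definition pd m (j : 'I_m) (f : pt m -> Cl m) : pt m -> Cl m :=
  fun x A => deriv_at (fun t => f (upd x j t) A) (x j).

Definition is_open m (U : pt m -> Prop) : Prop :=
  forall x, U x -> exists d, 0 < d /\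
    forall y : pt m, (forall i, Rabs (y i - x i) < d) -> U y.

Definition is_connected m (O : pt m -> Prop) : Prop :=
  (exists x, O x) /\
  forall U V : pt m -> Prop, is_open U -> is_open V ->
    (forall x, O x -> U x \/ V x) ->
    (forall x, O x -> U x -> V x -> False) ->
    (exists x, O x /\ U x) -> (exists x, O x /\ V x) -> False.

Definition is_domain m (O : pt m -> Prop) : Prop := is_open O /\ is_connected O.

Definition starlike0 m (O : pt m -> Prop) : Prop :=
  O (@origin m) /\
  forall x t, O x -> 0 <= t <= 1 -> O (fun i => t * x i).

Definition cont_on m (O : pt m -> Prop) (f : pt m -> Cl m) : Prop :=
  forall x, O x -> forall A, forall eps, 0 < eps -> exists d, 0 < d /\
    forall y, O y -> (forall i, Rabs (y i - x i) < d) -> Rabs (f y A - f x A) < eps.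

Fixpoint Ck m (k : nat) (O : pt m -> Prop) (f : pt m -> Cl m) : Prop :=
  match k with
  | 0%N => cont_on O f
  | k'.+1 => cont_on O f /\ (forall j x, O x -> has_pd f j x) /\
             (forall j, Ck k' O (pd j f))
  end.

Definition smooth_on m (O : pt m -> Prop) (f : pt m -> Cl m) : Prop :=
  forall k, Ck k O f.

Definition dirac_l m (f : pt m -> Cl m) (x : pt m) : Cl m := fun A =>
  \big[Rplus/0]_(j : 'I_m) cl_mul (cl_e j) (pd j f x) A.

Definition dirac_r m (f : pt m -> Cl m) (x : pt m) : Cl m := fun A =>
  \big[Rplus/0]_(j : 'I_m) cl_mul (pd j f x) (cl_e j) A.

Definition dirac_lr m (f : pt m -> Cl m) (x : pt m) : Cl m := fun A =>
  \big[Rplus/0]_(i : 'I_m) \big[Rplus/0]_(j : 'I_m)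
     cl_mul (cl_mul (cl_e i) (pd i (pd j f) x)) (cl_e j) A.

Definition laplace m (f : pt m -> Cl m) (x : pt m) : Cl m := fun A =>
  \big[Rplus/0]_(j : 'I_m) pd j (pd j f) x A.

Definition euler m (f : pt m -> Cl m) (x : pt m) : Cl m := fun A =>
  \big[Rplus/0]_(j : 'I_m) (x j * pd j f x A).

(* Monogenic functions are (automatically) real-analytic; we include smoothness
   in the definition. *)
Definition left_monogenic m (O : pt m -> Prop) (f : pt m -> Cl m) : Prop :=
  smooth_on O f /\ forall x, O x -> forall A, dirac_l f x A = 0.

Definition right_monogenic m (O : pt m -> Prop) (f : pt m -> Cl m) : Prop :=
  smooth_on O f /\ forall x, O x -> forall A, dirac_r f x A = 0.

Definition inframonogenic m (O : pt m -> Prop) (f : pt m -> Cl m) : Prop :=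
  Ck 2 O f /\ forall x, O x -> forall A, dirac_lr f x A = 0.

Definition harmonic m (O : pt m -> Prop) (f : pt m -> Cl m) : Prop :=
  Ck 2 O f /\ forall x, O x -> forall A, laplace f x A = 0.

Definition hom_poly_R m (k : nat) (g : pt m -> R) : Prop :=
  exists s : seq (R * ('I_m -> nat)),
    all (fun p => (\sum_(i : 'I_m) p.2 i)%N == k) s /\
    forall x, g x = \big[Rplus/0]_(p <- s) (p.1 * \big[Rmult/1]_(i : 'I_m) (x i ^ p.2 i)).

Definition hom_poly m (k : nat) (f : pt m -> Cl m) : Prop :=
  forall A, hom_poly_R k (fun x => f x A).

Definition whole_space m : pt m -> Prop := fun _ => True.

(* Main.v *)
Require Import Defs.
From HB Require Import structures.
From Stdlib Require Import Reals ClassicalEpsilon Lra FunctionalExtensionality.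
From mathcomp Require Import all_boot.
Set Implicit Arguments. Unset Strict Implicit. Unset Printing Implicit Defensive.
Local Open Scope R_scope.

Section BigR.
Variable I : Type.
Lemma bigR_mull (r : seq I) (P : pred I) (F : I -> R) c :
  c * (\big[Rplus/0]_(i <- r | P i) F i) = \big[Rplus/0]_(i <- r | P i) (c * F i).
Proof.
apply: (big_rec2 (fun a b => c * a = b)); first by rewrite Rmult_0_r.
by move=> i a b _ <-; rewrite Rmult_plus_distr_l.
Qed.
Lemma bigR_mulr (r : seq I) (P : pred I) (F : I -> R) c :
  (\big[Rplus/0]_(i <- r | P i) F i) * c = \big[Rplus/0]_(i <- r | P i) (F i * c).
Proof.
rewrite Rmult_comm bigR_mull; apply: eq_bigr => i _; apply Rmult_comm.
Qed.
Lemma bigR_opp (r : seq I) (P : pred I) (F : I -> R) :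
  - (\big[Rplus/0]_(i <- r | P i) F i) = \big[Rplus/0]_(i <- r | P i) (- F i).
Proof.
apply: (big_rec2 (fun a b => - a = b)); first by rewrite Ropp_0.
by move=> i a b _ <-; rewrite Ropp_plus_distr.
Qed.
Lemma bigR0 (r : seq I) (P : pred I) (F : I -> R) :
  (forall i, P i -> F i = 0) -> \big[Rplus/0]_(i <- r | P i) F i = 0.
Proof. by move=> H; rewrite big1. Qed.
Lemma bigR_add (r : seq I) (P : pred I) (F G : I -> R) :
  \big[Rplus/0]_(i <- r | P i) (F i + G i) =
  (\big[Rplus/0]_(i <- r | P i) F i) + \big[Rplus/0]_(i <- r | P i) G i.
Proof. exact: big_split. Qed.
End BigR.

Section Cliff.
Variable m : nat.
Implicit Types (A B C X : {set 'I_m}) (i j y : 'I_m) (a b : Cl m).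

Definition sd A B : {set 'I_m} := (A :\: B) :|: (B :\: A).
Lemma in_sd A B x : (x \in sd A B) = (x \in A) (+) (x \in B).
Proof. by rewrite /sd !inE; case: (x \in A); case: (x \in B). Qed.
Lemma sd_eq A B C : (sd A B == C) = (B == sd A C).
Proof.
apply/eqP/eqP => [<-|->]; apply/setP => x; rewrite !in_sd;
  by case: (x \in A); case: (x \in B) => //; case: (x \in C).
Qed.
Lemma sdK A C : sd A (sd A C) = C.
Proof. apply/setP => x; rewrite !in_sd; by case: (x \in A); case: (x \in C). Qed.
Lemma sdC3 A B C : sd A (sd B C) = sd B (sd A C).
Proof. apply/setP => x; rewrite !in_sd; by case: (x \in A); case: (x \in B); case: (x \in C). Qed.

Definition T i C := sd [set i] C.
Definition sg i X : R := (-1) ^ (#|[set x in X | (x <= i)%N]|).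
Definition Lj i b : Cl m := fun C => sg i (T i C) * b (T i C).

Lemma cl_mul_sum a b C :
  cl_mul a b C = \big[Rplus/0]_A (blade_sign A (sd A C) * a A * b (sd A C)).
Proof.
rewrite /cl_mul; apply: eq_bigr => A _.
rewrite (eq_bigl (fun B => B == sd A C)); last by move=> B; rewrite -sd_eq.
by rewrite big_pred1_eq.
Qed.

Lemma bsign1 i X : blade_sign [set i] X = sg i X.
Proof.
rewrite /blade_sign /sg; congr (_ ^ _).
have -> : [set p : 'I_m * 'I_m | [&& p.1 \in [set i], p.2 \in X & (p.2 < p.1)%N]]
   = [set (i, x) | x in [set x in X | (x < i)%N]].
  apply/setP => -[u v]; rewrite !inE /=.
  apply/idP/imsetP.
    case/and3P => /eqP -> vX vi; exists v => //; by rewrite inE vX.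
  by case=> x; rewrite inE => /andP [xX xi] [-> ->]; rewrite eqxx xX xi.
rewrite card_imset; last by move=> x1 x2 [].
case iX: (i \in X).
  have -> : [set x in X | (x <= i)%N] = i |: [set x in X | (x < i)%N].
    apply/setP => x; rewrite !inE leq_eqVlt val_eqE.
    by case: (x =P i) => [->|_] /=; rewrite ?iX.
  rewrite cardsU1 inE ltnn andbF /= addnC; congr (_ + _)%N.
  rewrite (_ : [set i] :&: X = [set i]) ?cards1 //.
  by apply/setP => x; rewrite !inE; case: (x =P i) => // ->.
have -> : [set x in X | (x <= i)%N] = [set x in X | (x < i)%N].
  apply/setP => x; rewrite !inE leq_eqVlt val_eqE.
  by case: (x =P i) => [->|_] //=; rewrite iX.
rewrite (_ : [set i] :&: X = set0) ?cards0 ?addn0 //.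
apply/setP => x; rewrite !inE; case: (x =P i) => // ->; by rewrite iX.
Qed.

Lemma cl_mul_e i b C : cl_mul (cl_e i) b C = Lj i b C.
Proof.
rewrite cl_mul_sum (bigD1 [set i]) //= big1 ?Rplus_0_r.
  by rewrite /cl_e eqxx bsign1 Rmult_1_r.
by move=> A /negPf HA; rewrite /cl_e HA Rmult_0_r Rmult_0_l.
Qed.

Lemma powm1_S n : (-1) ^ n.+1 = - (-1) ^ n.
Proof. by rewrite /= Ropp_mult_distr_l_reverse Rmult_1_l. Qed.
Lemma powm1_sq n : (-1) ^ n * (-1) ^ n = 1.
Proof. by rewrite -Rpow_mult_distr (_ : -1 * -1 = 1) ?pow1 //; lra. Qed.

Lemma sg_T i y X : sg i (T y X) = (if (y <= i)%N then -1 else 1) * sg i X.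
Proof.
rewrite /sg.
case: (leqP y i) => yi; last first.
  rewrite Rmult_1_l; have -> // : [set x in T y X | (x <= i)%N] = [set x in X | (x <= i)%N].
  apply/setP => x; rewrite !inE.
  case: (x =P y) => [->|_] /=; last by rewrite andbF.
  by rewrite (leqNgt y i) yi !andbF.
set S := [set x in X | (x <= i)%N].
case yS: (y \in S).
  have -> : [set x in T y X | (x <= i)%N] = S :\ y.
    apply/setP => x; rewrite !inE; case: (x =P y) => [->|_] /=; last by rewrite andbF.
    by move: yS; rewrite inE => /andP [-> _].
  by rewrite (cardsD1 y S) yS add1n powm1_S Ropp_mult_distr_l_reverse Rmult_1_l Ropp_involutive.
have -> : [set x in T y X | (x <= i)%N] = y |: S.
  apply/setP => x; rewrite !inE; case: (x =P y) => [->|_] /=; last by rewrite andbF.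
  by move: yS; rewrite inE yi andbT => /negbT -> /=.
by rewrite cardsU1 yS add1n powm1_S Ropp_mult_distr_l_reverse Rmult_1_l.
Qed.

Lemma TT i C : T i (T i C) = C.
Proof. exact: sdK. Qed.
Lemma TC i j C : T i (T j C) = T j (T i C).
Proof. exact: sdC3. Qed.

Lemma Lj_anti i j b C :
  Lj i (Lj j b) C + Lj j (Lj i b) C = (if i == j then -2 else 0) * b C.
Proof.
rewrite /Lj TC !sg_T !leqnn.
case: (i =P j) => [<-|/eqP ne].
  rewrite !leqnn TT.
  have H : sg i C * sg i C = 1 by apply: powm1_sq.
  have -> : -1 * sg i C * (-1 * (-1 * sg i C) * b C) = - (sg i C * sg i C) * b C by ring.
  rewrite H; ring.
rewrite (TC i j).
have : (i <= j)%N || (j <= i)%N by apply: leq_total.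
case/orP => H.
  have H' : (j <= i)%N = false.
    apply/negbTE; rewrite -ltnNge ltn_neqAle H andbT; apply/eqP => /val_inj; by apply/eqP.
  rewrite H H'; lra.
have H' : (i <= j)%N = false.
  apply/negbTE; rewrite -ltnNge ltn_neqAle H andbT; apply/eqP => /val_inj E; move: ne; by rewrite E eqxx.
rewrite H H'; lra.
Qed.


Lemma cl_mul_suml (J : Type) (r : seq J) (c : J -> R) (G : J -> Cl m) b C :
  cl_mul (fun A => \big[Rplus/0]_(k <- r) (c k * G k A)) b C =
  \big[Rplus/0]_(k <- r) (c k * cl_mul (G k) b C).
Proof.
rewrite cl_mul_sum.
under eq_bigr => A _ do rewrite bigR_mull bigR_mulr.
rewrite exchange_big; apply: eq_bigr => k _.
rewrite cl_mul_sum bigR_mull; apply: eq_bigr => A _; lra.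
Qed.

Lemma vec_mul x b C : cl_mul (vec x) b C = \big[Rplus/0]_(k : 'I_m) (x k * Lj k b C).
Proof.
rewrite /vec cl_mul_suml; apply: eq_bigr => k _; by rewrite cl_mul_e.
Qed.


Lemma Lj_ext i b b' C : (forall D, b D = b' D) -> Lj i b C = Lj i b' C.
Proof. by move=> H; rewrite /Lj H. Qed.
Lemma Lj_zero i b C : (forall D, b D = 0) -> Lj i b C = 0.
Proof. by move=> H; rewrite /Lj H Rmult_0_r. Qed.
Lemma Lj_sumf i (J : Type) (r : seq J) (c : J -> R) (G : J -> Cl m) C :
  Lj i (fun D => \big[Rplus/0]_(k <- r) (c k * G k D)) C =
  \big[Rplus/0]_(k <- r) (c k * Lj i (G k) C).
Proof.
rewrite /Lj bigR_mull; apply: eq_bigr => k _; ring.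
Qed.
Lemma Lj_lin i b b' c c' C : Lj i (fun D => c * b D + c' * b' D) C = c * Lj i b C + c' * Lj i b' C.
Proof. rewrite /Lj; ring. Qed.

Lemma dirac_sq (M : 'I_m -> 'I_m -> Cl m) C :
  (forall i j D, M i j D = M j i D) ->
  \big[Rplus/0]_(i : 'I_m) \big[Rplus/0]_(j : 'I_m) Lj i (Lj j (M i j)) C =
  - \big[Rplus/0]_(i : 'I_m) M i i C.
Proof.
move=> HM.
set S := \big[Rplus/0]_(i : 'I_m) \big[Rplus/0]_(j : 'I_m) Lj i (Lj j (M i j)) C.
have E : S = \big[Rplus/0]_(i : 'I_m) \big[Rplus/0]_(j : 'I_m) Lj j (Lj i (M i j)) C.
  rewrite /S exchange_big; apply: eq_bigr => i _; apply: eq_bigr => j _.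
  by rewrite (_ : M j i = M i j) //; apply: functional_extensionality => D.
have E2 : S + S = -2 * \big[Rplus/0]_(i : 'I_m) M i i C.
  rewrite bigR_mull {1}E /S -bigR_add; apply: eq_bigr => i _.
  rewrite -bigR_add (bigD1 i) //= big1.
    by rewrite Rplus_0_r Lj_anti eqxx.
  move=> j /negPf ne; by rewrite Lj_anti ne Rmult_0_l.
lra.
Qed.

End Cliff.

Section Anal.
Variable m : nat.
Implicit Types (x y : pt m) (i j : 'I_m) (f g : pt m -> R).

Inductive HasD j g x l : Prop :=
  HasD_i : derivable_pt_lim (fun t => g (upd x j t)) (x j) l -> HasD j g x l.
Lemma HasD_e j g x l : HasD j g x l -> derivable_pt_lim (fun t => g (upd x j t)) (x j) l.
Proof. by case. Qed.
Definition pdR j g x := deriv_at (fun t => g (upd x j t)) (x j).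

Lemma upd_id x j : upd x j (x j) = x.
Proof. apply: functional_extensionality => k; rewrite /upd; by case: (k =P j) => [->|]. Qed.
Lemma upd_same x j t : upd x j t j = t.
Proof. by rewrite /upd eqxx. Qed.
Lemma upd_upd x j s t : upd (upd x j s) j t = upd x j t.
Proof. apply: functional_extensionality => k; rewrite /upd; by case: (k =P j). Qed.
Lemma upd_comm i j x a b : i != j -> upd (upd x i a) j b = upd (upd x j b) i a.
Proof.
move=> ne; apply: functional_extensionality => k; rewrite /upd.
case: (k =P j) => [->|]; last by [].
by rewrite eq_sym (negPf ne).
Qed.
Lemma upd_other x i j t : i != j -> upd x j t i = x i.
Proof. by move=> ne; rewrite /upd (negPf ne). Qed.

Lemma HasD_pdR j g x l : HasD j g x l -> pdR j g x = l.
Proof.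
move=> /HasD_e H; rewrite /pdR /deriv_at.
apply: (uniqueness_limite (fun t => g (upd x j t)) (x j)); last exact H.
apply: epsilon_spec; by exists l.
Qed.
Lemma HasD_ex j g x l : HasD j g x l -> HasD j g x (pdR j g x).
Proof. by move=> H; rewrite (HasD_pdR H). Qed.

Lemma HasD_add j f g x l1 l2 : HasD j f x l1 -> HasD j g x l2 ->
  HasD j (fun y => f y + g y) x (l1 + l2).
Proof. move=> /HasD_e H1 /HasD_e H2; constructor; exact: (derivable_pt_lim_plus _ _ _ _ _ H1 H2). Qed.
Lemma HasD_mul j f g x l1 l2 : HasD j f x l1 -> HasD j g x l2 ->
  HasD j (fun y => f y * g y) x (l1 * g x + f x * l2).
Proof.
move=> /HasD_e H1 /HasD_e H2; have := derivable_pt_lim_mult _ _ _ _ _ H1 H2.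
by rewrite /mult_fct upd_id; constructor.
Qed.
Lemma HasD_const j c x : HasD j (fun _ => c) x 0.
Proof. constructor; exact: derivable_pt_lim_const. Qed.
Lemma HasD_coord j i x : HasD j (fun y => y i) x (if i == j then 1 else 0).
Proof.
constructor; case: (i =P j) => [->|/eqP ne].
  rewrite (_ : (fun t => upd x j t j) = id); first exact: derivable_pt_lim_id.
  by apply: functional_extensionality => t; rewrite upd_same.
rewrite (_ : (fun t => upd x j t i) = fct_cte (x i)); first exact: derivable_pt_lim_const.
by apply: functional_extensionality => t; rewrite upd_other.
Qed.
Lemma HasD_scal j c g x l : HasD j g x l -> HasD j (fun y => c * g y) x (c * l).
Proof.
move=> H; have := HasD_mul (HasD_const j c x) H. by rewrite Rmult_0_l Rplus_0_l.
Qed.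
Lemma HasD_sum (J : Type) (r : seq J) (P : pred J) j (F : J -> pt m -> R) (L : J -> R) x :
  (forall k, P k -> HasD j (F k) x (L k)) ->
  HasD j (fun y => \big[Rplus/0]_(k <- r | P k) F k y) x (\big[Rplus/0]_(k <- r | P k) L k).
Proof.
move=> H; elim: r => [|a r IH].
  rewrite big_nil; under [fun y => _]functional_extensionality => y do rewrite big_nil.
  exact: HasD_const.
rewrite big_cons; under [fun y => _]functional_extensionality => y do rewrite big_cons.
case Pa: (P a); last exact IH.
exact: HasD_add (H a Pa) IH.
Qed.

Lemma HasD_local (O : pt m -> Prop) j f g x l :
  is_open O -> O x -> (forall y, O y -> f y = g y) -> HasD j g x l -> HasD j f x l.
Proof.
move=> Oo Ox E /HasD_e H; constructor => eps Heps.
case: (Oo x Ox) => d [d0 Hd].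
case: (H eps Heps) => del Hdel.
have mp : 0 < Rmin del d by apply: Rmin_pos; [apply: cond_pos|].
exists (mkposreal _ mp) => h hn hl; rewrite /= in hl.
have inO : forall t, Rabs (t - x j) < d -> O (upd x j t).
  move=> t Ht; apply: Hd => k; rewrite /upd; case: (k =P j) => [->|_] //.
  by rewrite Rminus_diag Rabs_R0.
have O1 : O (upd x j (x j)) by apply: inO; rewrite Rminus_diag Rabs_R0.
have O2 : O (upd x j (x j + h)).
  apply: inO; rewrite (_ : x j + h - x j = h); last ring.
  apply: Rlt_le_trans hl _; exact: Rmin_r.
rewrite !E //.
apply: Hdel => //; apply: Rlt_le_trans hl _; exact: Rmin_l.
Qed.

Definition contR (O : pt m -> Prop) g := forall x, O x -> forall eps, 0 < eps ->
  exists d, 0 < d /\ forall y, O y -> (forall i, Rabs (y i - x i) < d) -> Rabs (g y - g x) < eps.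

Lemma contR_const O c : contR O (fun _ => c).
Proof. move=> x _ eps He; exists 1; split; [lra|] => y _ _; rewrite Rminus_diag Rabs_R0; lra. Qed.
Lemma contR_coord O i : contR O (fun y => y i).
Proof. move=> x _ eps He; exists eps; split => // y _ H; exact: H. Qed.
Lemma contR_ext O f g : contR O f -> (forall y, O y -> f y = g y) -> contR O g.
Proof.
move=> H E x Ox eps He; case: (H x Ox eps He) => d [d0 Hd]; exists d; split => // y Oy Hy.
rewrite -!E //; exact: Hd.
Qed.
Lemma contR_add O f g : contR O f -> contR O g -> contR O (fun y => f y + g y).
Proof.
move=> Hf Hg x Ox eps He.
have He2 : 0 < eps / 2 by lra.
case: (Hf x Ox _ He2) => d1 [d1p H1]; case: (Hg x Ox _ He2) => d2 [d2p H2].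
exists (Rmin d1 d2); split; first exact: Rmin_pos.
move=> y Oy Hy.
have A1 := H1 y Oy (fun i => Rlt_le_trans _ _ _ (Hy i) (Rmin_l _ _)).
have A2 := H2 y Oy (fun i => Rlt_le_trans _ _ _ (Hy i) (Rmin_r _ _)).
rewrite (_ : f y + g y - (f x + g x) = (f y - f x) + (g y - g x)); last ring.
apply: Rle_lt_trans (Rabs_triang _ _) _; lra.
Qed.
Lemma contR_mul O f g : contR O f -> contR O g -> contR O (fun y => f y * g y).
Proof.
move=> Hf Hg x Ox eps He.
set a := Rabs (f x); set b := Rabs (g x).
have a0 : 0 <= a by apply: Rabs_pos.
have b0 : 0 <= b by apply: Rabs_pos.
have e2p : 0 < eps / (2 * (a + 1)).
  apply: Rdiv_lt_0_compat => //; lra.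
have e1p : 0 < Rmin 1 (eps / (2 * (b + 1))).
  apply: Rmin_pos; [lra|]; apply: Rdiv_lt_0_compat => //; lra.
case: (Hf x Ox _ e1p) => d1 [d1p H1]; case: (Hg x Ox _ e2p) => d2 [d2p H2].
exists (Rmin d1 d2); split; first exact: Rmin_pos.
move=> y Oy Hy.
have A1 := H1 y Oy (fun i => Rlt_le_trans _ _ _ (Hy i) (Rmin_l _ _)).
have A2 := H2 y Oy (fun i => Rlt_le_trans _ _ _ (Hy i) (Rmin_r _ _)).
have A1' : Rabs (f y - f x) < 1 by apply: Rlt_le_trans A1 (Rmin_l _ _).
have A1'' : Rabs (f y - f x) <= eps / (2 * (b + 1)) by apply: Rlt_le; apply: Rlt_le_trans A1 (Rmin_r _ _).
have Fy : Rabs (f y) < a + 1.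
  rewrite (_ : f y = (f y - f x) + f x); last ring.
  apply: Rle_lt_trans (Rabs_triang _ _) _; rewrite /a; lra.
rewrite (_ : f y * g y - f x * g x = f y * (g y - g x) + g x * (f y - f x)); last ring.
apply: Rle_lt_trans (Rabs_triang _ _) _; rewrite !Rabs_mult.
have P1 : Rabs (f y) * Rabs (g y - g x) < eps / 2.
  have -> : eps / 2 = (a + 1) * (eps / (2 * (a + 1))) by field; lra.
  have := Rabs_pos (f y); have := Rabs_pos (g y - g x); nra.
have P2 : b * Rabs (f y - f x) <= eps / 2.
  have -> : eps / 2 = (b + 1) * (eps / (2 * (b + 1))) by field; lra.
  have := Rabs_pos (f y - f x); nra.
rewrite -/b; lra.
Qed.

Fixpoint CkR (k : nat) (O : pt m -> Prop) (g : pt m -> R) : Prop :=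
  match k with
  | 0%N => contR O g
  | k'.+1 => contR O g /\ (forall j x, O x -> exists l, HasD j g x l) /\
             (forall j, CkR k' O (pdR j g))
  end.

Lemma Ck_CkR k O (F : pt m -> Cl m) : Ck k O F <-> forall C, CkR k O (fun y => F y C).
Proof.
have cont_iff : forall G : pt m -> Cl m, cont_on O G <-> forall C, contR O (fun y => G y C).
  move=> G; split => H.
    move=> C x Ox; exact: H.
  move=> x Ox C; exact: H.
elim: k F => [|k IH] F /=; first exact: cont_iff.
split.
  case=> [Hc [Hp Hk]] C; split; first by apply cont_iff.
  split; first by move=> j x Ox; case: (Hp j x Ox C) => l Hl; exists l; constructor.
  move=> j; have := (IH (pd j F)).1 (Hk j) C; done.
move=> H; split; first by apply/cont_iff => C; case: (H C).
split; first by move=> j x Ox C; case: (H C) => _ [Hp _]; case: (Hp j x Ox) => l /HasD_e Hl; exists l.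
move=> j; apply/IH => C; case: (H C) => _ [_ Hk]; exact: Hk.
Qed.

Lemma CkR_cont k O g : CkR k O g -> contR O g.
Proof. by case: k => [|k] //= [H _]. Qed.

Lemma CkR_weak k O g : CkR k.+1 O g -> CkR k O g.
Proof.
elim: k g => [|k IH] g /=; first by case.
case=> Hc [Hp Hk]; split => //; split => // j; exact: IH.
Qed.

Lemma CkR_ext k O f g : is_open O -> CkR k O f -> (forall y, O y -> f y = g y) -> CkR k O g.
Proof.
move=> Oo; elim: k f g => [|k IH] f g /=; first by move=> H E; exact: contR_ext H E.
case=> Hc [Hp Hk] E; split; first exact: contR_ext Hc E.
split.
  move=> j x Ox; case: (Hp j x Ox) => l Hl; exists l.
  apply: (HasD_local Oo Ox (g:=f)) => // y Oy; by rewrite E.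
move=> j; apply: IH (Hk j) _ => y Oy.
case: (Hp j y Oy) => l Hl.
rewrite (HasD_pdR Hl); symmetry; apply: HasD_pdR.
apply: (HasD_local Oo Oy (g:=f)) => // z Oz; by rewrite E.
Qed.

Lemma CkR_const k O c : is_open O -> CkR k O (fun _ => c).
Proof.
move=> Oo; elim: k c => [|k IH] c; first exact: contR_const.
split; first exact: contR_const.
split; first by move=> j x _; exists 0; exact (HasD_const j c x).
move=> j; apply: CkR_ext Oo (IH 0) _ => y _; symmetry; apply: HasD_pdR; exact (HasD_const j c y).
Qed.

Lemma CkR_coord k O i : is_open O -> CkR k O (fun y => y i).
Proof.
move=> Oo; case: k => [|k] /=; first exact: contR_coord.
split; first exact: contR_coord.
split; first by move=> j x _; eexists; exact: HasD_coord.
move=> j; apply: (CkR_ext Oo (@CkR_const k O (if i == j then 1 else 0) Oo)) => y _.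
symmetry; apply: HasD_pdR; exact: HasD_coord.
Qed.

Lemma CkR_add k O f g : is_open O -> CkR k O f -> CkR k O g -> CkR k O (fun y => f y + g y).
Proof.
move=> Oo; elim: k f g => [|k IH] f g /=; first exact: contR_add.
case=> Hcf [Hpf Hkf] [Hcg [Hpg Hkg]]; split; first exact: contR_add.
split.
  move=> j x Ox; case: (Hpf j x Ox) => l1 H1; case: (Hpg j x Ox) => l2 H2.
  eexists; exact: HasD_add H1 H2.
move=> j; apply: CkR_ext Oo (IH _ _ (Hkf j) (Hkg j)) _ => y Oy.
case: (Hpf j y Oy) => l1 H1; case: (Hpg j y Oy) => l2 H2.
symmetry; apply: HasD_pdR; apply: HasD_add; apply: HasD_ex; eassumption.
Qed.

Lemma CkR_mul k O f g : is_open O -> CkR k O f -> CkR k O g -> CkR k O (fun y => f y * g y).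
Proof.
move=> Oo; elim: k f g => [|k IH] f g /=; first exact: contR_mul.
move=> Hf Hg; have Hf' := CkR_weak Hf; have Hg' := CkR_weak Hg.
case: Hf => Hcf [Hpf Hkf]; case: Hg => Hcg [Hpg Hkg]; split; first exact: contR_mul.
split.
  move=> j x Ox; case: (Hpf j x Ox) => l1 H1; case: (Hpg j x Ox) => l2 H2.
  eexists; exact: HasD_mul H1 H2.
move=> j.
apply: (CkR_ext Oo (CkR_add Oo (IH _ _ (Hkf j) Hg') (IH _ _ Hf' (Hkg j)))) => y Oy.
case: (Hpf j y Oy) => l1 H1; case: (Hpg j y Oy) => l2 H2.
symmetry; apply: HasD_pdR; apply: HasD_mul; apply: HasD_ex; eassumption.
Qed.

Lemma CkR_sum k O (J : Type) (r : seq J) (P : pred J) (F : J -> pt m -> R) :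
  is_open O -> (forall a, P a -> CkR k O (F a)) ->
  CkR k O (fun y => \big[Rplus/0]_(a <- r | P a) F a y).
Proof.
move=> Oo H; elim: r => [|a r IH].
  apply: (CkR_ext Oo (@CkR_const k O 0 Oo)) => y _; by rewrite big_nil.
case Pa: (P a).
  apply: (CkR_ext Oo (CkR_add Oo (H a Pa) IH)) => y _; by rewrite big_cons Pa.
apply: (CkR_ext Oo IH) => y _; by rewrite big_cons Pa.
Qed.

Lemma CkR_prod k O (J : Type) (r : seq J) (F : J -> pt m -> R) :
  is_open O -> (forall a, CkR k O (F a)) ->
  CkR k O (fun y => \big[Rmult/1]_(a <- r) F a y).
Proof.
move=> Oo H; elim: r => [|a r IH].
  apply: (CkR_ext Oo (@CkR_const k O 1 Oo)) => y _; by rewrite big_nil.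
apply: (CkR_ext Oo (CkR_mul Oo (H a) IH)) => y _; by rewrite big_cons.
Qed.

Lemma CkR_pow k O g n : is_open O -> CkR k O g -> CkR k O (fun y => g y ^ n).
Proof.
move=> Oo H; elim: n => [|n IH] /=; first exact: (@CkR_const k O 1 Oo).
exact: (CkR_mul Oo H IH).
Qed.

Lemma CkR_pd k O g j : CkR k.+1 O g -> CkR k O (pdR j g).
Proof. by move=> /= [_ [_ H]]. Qed.

End Anal.

Section Schwarz.
Variable m : nat.
Variables (i j : 'I_m) (x : pt m).
Hypothesis ne : i != j.

Definition Q a b := upd (upd x i a) j b.
Lemma Q_i a b : Q a b i = a.
Proof. by rewrite /Q upd_other // upd_same. Qed.
Lemma Q_j a b : Q a b j = b.
Proof. by rewrite /Q upd_same. Qed.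
Lemma Q_uj a b b' : upd (Q a b) j b' = Q a b'.
Proof. by rewrite /Q upd_upd. Qed.
Lemma Q_ui a b a' : upd (Q a b) i a' = Q a' b.
Proof. by rewrite /Q -upd_comm // upd_upd. Qed.
Lemma Q_x : Q (x i) (x j) = x.
Proof. by rewrite /Q !upd_id. Qed.
Lemma Q_dist a b e : Rabs (a - x i) <= e -> Rabs (b - x j) <= e -> 0 <= e ->
  forall k, Rabs (Q a b k - x k) <= e.
Proof.
move=> Ha Hb He k; rewrite /Q /upd.
case: (k =P j) => [->|_] //; case: (k =P i) => [->|_] //.
by rewrite Rminus_diag Rabs_R0.
Qed.

Lemma derQi (G : pt m -> R) a b l : HasD i G (Q a b) l ->
  derivable_pt_lim (fun t => G (Q t b)) a l.
Proof.
case; rewrite Q_i.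
by rewrite (_ : (fun t => G (upd (Q a b) i t)) = (fun t => G (Q t b))) //;
  apply: functional_extensionality => t; rewrite Q_ui.
Qed.
Lemma derQj (G : pt m -> R) a b l : HasD j G (Q a b) l ->
  derivable_pt_lim (fun t => G (Q a t)) b l.
Proof.
case; rewrite Q_j.
by rewrite (_ : (fun t => G (upd (Q a b) j t)) = (fun t => G (Q a t))) //;
  apply: functional_extensionality => t; rewrite Q_uj.
Qed.

Lemma schwarz_ne (O : pt m -> Prop) g : is_open O -> CkR 2 O g -> O x ->
  pdR i (pdR j g) x = pdR j (pdR i g) x.
Proof.
move=> Oo /= [_ [Hp Hk]] Ox.
have [Hci [Hpi Hki]] := Hk i; have [Hcj [Hpj Hkj]] := Hk j.
have D1c := Hki j. have D2c := Hkj i.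
rewrite /= in D1c D2c.
case: (Oo x Ox) => del [delp Hdel].
apply: cond_eq => e ep.
have e2 : 0 < e / 2 by lra.
case: (D1c x Ox _ e2) => d1 [d1p H1].
case: (D2c x Ox _ e2) => d2 [d2p H2].
set eps := Rmin del (Rmin d1 d2) / 2.
have epsp : 0 < eps by rewrite /eps; apply: Rdiv_lt_0_compat; [repeat apply: Rmin_pos|]; lra.
have epsl : eps < del /\ eps < d1 /\ eps < d2.
  have := Rmin_l del (Rmin d1 d2); have := Rmin_r del (Rmin d1 d2);
  have := Rmin_l d1 d2; have := Rmin_r d1 d2; rewrite /eps; lra.
have inbox : forall a b, x i <= a <= x i + eps -> x j <= b <= x j + eps ->
    forall k, Rabs (Q a b k - x k) <= eps.
  move=> a b Ha Hb; apply: Q_dist; try lra; rewrite Rabs_right; lra.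
have inO : forall a b, x i <= a <= x i + eps -> x j <= b <= x j + eps -> O (Q a b).
  move=> a b Ha Hb; apply: Hdel => k; have := inbox a b Ha Hb k; lra.
set Del := g (Q (x i + eps) (x j + eps)) - g (Q (x i + eps) (x j))
         - g (Q (x i) (x j + eps)) + g (Q (x i) (x j)).
have hd : forall (G : pt m -> R) k y, O y -> (exists l, HasD k G y l) -> HasD k G y (pdR k G y).
  by move=> G k y _ [l Hl]; exact: HasD_ex Hl.
have [s [Es Hs]] : exists s, Del = (pdR i g (Q s (x j + eps)) - pdR i g (Q s (x j))) * (x i + eps - x i)
                     /\ x i < s < x i + eps.
  have [t0 [E0 H0]] : exists t, (g (Q (x i + eps) (x j + eps)) - g (Q (x i + eps) (x j))) -
        (g (Q (x i) (x j + eps)) - g (Q (x i) (x j))) =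
        (pdR i g (Q t (x j + eps)) - pdR i g (Q t (x j))) * (x i + eps - x i) /\ x i < t < x i + eps.
    apply: (MVT_cor2 (fun a => g (Q a (x j + eps)) - g (Q a (x j)))
                   (fun a => pdR i g (Q a (x j + eps)) - pdR i g (Q a (x j)))); first lra.
    move=> c Hc.
    have O1 : O (Q c (x j + eps)) by apply: inO; lra.
    have O2 : O (Q c (x j)) by apply: inO; lra.
    apply: derivable_pt_lim_minus; apply: derQi;
      [exact: hd _ _ _ O1 (Hp i _ O1) | exact: hd _ _ _ O2 (Hp i _ O2)].
  exists t0; split => //; rewrite -E0 /Del; ring.
have [t [Et Ht]] : exists t, pdR i g (Q s (x j + eps)) - pdR i g (Q s (x j)) =
     pdR j (pdR i g) (Q s t) * (x j + eps - x j) /\ x j < t < x j + eps.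
  apply: (MVT_cor2 (fun b => pdR i g (Q s b)) (fun b => pdR j (pdR i g) (Q s b))); first lra.
  move=> c Hc; have O1 : O (Q s c) by apply: inO; lra.
  apply: derQj; exact: hd _ _ _ O1 (Hpi j _ O1).
have [t' [Et' Ht']] : exists t, Del = (pdR j g (Q (x i + eps) t) - pdR j g (Q (x i) t)) * (x j + eps - x j)
                     /\ x j < t < x j + eps.
  have [t0 [E0 H0]] : exists t, (g (Q (x i + eps) (x j + eps)) - g (Q (x i) (x j + eps))) -
        (g (Q (x i + eps) (x j)) - g (Q (x i) (x j))) =
        (pdR j g (Q (x i + eps) t) - pdR j g (Q (x i) t)) * (x j + eps - x j) /\ x j < t < x j + eps.
    apply: (MVT_cor2 (fun b => g (Q (x i + eps) b) - g (Q (x i) b))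
                   (fun b => pdR j g (Q (x i + eps) b) - pdR j g (Q (x i) b))); first lra.
    move=> c Hc.
    have O1 : O (Q (x i + eps) c) by apply: inO; lra.
    have O2 : O (Q (x i) c) by apply: inO; lra.
    apply: derivable_pt_lim_minus; apply: derQj;
      [exact: hd _ _ _ O1 (Hp j _ O1) | exact: hd _ _ _ O2 (Hp j _ O2)].
  exists t0; split => //; rewrite -E0 /Del; ring.
have [s' [Es' Hs']] : exists s, pdR j g (Q (x i + eps) t') - pdR j g (Q (x i) t') =
     pdR i (pdR j g) (Q s t') * (x i + eps - x i) /\ x i < s < x i + eps.
  apply: (MVT_cor2 (fun a => pdR j g (Q a t')) (fun a => pdR i (pdR j g) (Q a t'))); first lra.
  move=> c Hc; have O1 : O (Q c t') by apply: inO; lra.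
  apply: derQi; exact: hd _ _ _ O1 (Hpj i _ O1).
have Eq : pdR j (pdR i g) (Q s t) = pdR i (pdR j g) (Q s' t').
  have E1 : Del = pdR j (pdR i g) (Q s t) * (eps * eps).
    rewrite Es Et; ring.
  have E2 : Del = pdR i (pdR j g) (Q s' t') * (eps * eps).
    rewrite Et' Es'; ring.
  have ee : eps * eps <> 0 by nra.
  apply: (Rmult_eq_reg_r (eps * eps)) => //; by rewrite -E1 -E2.
have B1 := H1 (Q s t) (inO s t (conj (Rlt_le _ _ (proj1 Hs)) (Rlt_le _ _ (proj2 Hs)))
                          (conj (Rlt_le _ _ (proj1 Ht)) (Rlt_le _ _ (proj2 Ht)))).
have B2 := H2 (Q s' t') (inO s' t' (conj (Rlt_le _ _ (proj1 Hs')) (Rlt_le _ _ (proj2 Hs')))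
                          (conj (Rlt_le _ _ (proj1 Ht')) (Rlt_le _ _ (proj2 Ht')))).
have Hb1 : forall k, Rabs (Q s t k - x k) < d1.
  move=> k; have := inbox s t (conj (Rlt_le _ _ (proj1 Hs)) (Rlt_le _ _ (proj2 Hs)))
                          (conj (Rlt_le _ _ (proj1 Ht)) (Rlt_le _ _ (proj2 Ht))) k; lra.
have Hb2 : forall k, Rabs (Q s' t' k - x k) < d2.
  move=> k; have := inbox s' t' (conj (Rlt_le _ _ (proj1 Hs')) (Rlt_le _ _ (proj2 Hs')))
                          (conj (Rlt_le _ _ (proj1 Ht')) (Rlt_le _ _ (proj2 Ht'))) k; lra.
have C1 := B1 Hb1; have C2 := B2 Hb2.
rewrite Eq in C1.
rewrite (_ : pdR i (pdR j g) x - pdR j (pdR i g) x =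
   (pdR i (pdR j g) x - pdR i (pdR j g) (Q s' t')) + (pdR j (pdR i g) (Q s t) - pdR j (pdR i g) x)); last first.
  rewrite Eq; ring.
apply: Rle_lt_trans (Rabs_triang _ _) _.
rewrite Rabs_minus_sym; rewrite Eq; lra.
Qed.

End Schwarz.

Lemma schwarz m (O : pt m -> Prop) g (i j : 'I_m) x : is_open O -> CkR 2 O g -> O x ->
  pdR i (pdR j g) x = pdR j (pdR i g) x.
Proof.
case: (i =P j) => [->|/eqP ne] //; exact: schwarz_ne.
Qed.

Lemma sumR_const n c : \big[Rplus/0]_(i < n) c = INR n * c.
Proof.
rewrite big_const_ord; elim: n => [|n IH] /=; first ring.
rewrite IH; case: n {IH} => [|n] /=; ring.
Qed.

Section Ops.
Variable m : nat.
Implicit Types (x y : pt m) (F G g : pt m -> Cl m) (C D : {set 'I_m}).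

Definition hpAll F x := forall j D, exists l, HasD j (fun y => F y D) x l.

Lemma pdE F j x C : pd j F x C = pdR j (fun y => F y C) x.
Proof. by []. Qed.

Lemma diracE F x C : dirac_l F x C = \big[Rplus/0]_(i : 'I_m) Lj i (pd i F x) C.
Proof. by apply: eq_bigr => i _; rewrite cl_mul_e. Qed.

Lemma Lj_sum i (J : Type) (r : seq J) (G : J -> Cl m) C :
  Lj i (fun D => \big[Rplus/0]_(k <- r) G k D) C = \big[Rplus/0]_(k <- r) Lj i (G k) C.
Proof. by rewrite /Lj bigR_mull. Qed.

Lemma HasD_comp F j x D : (exists l, HasD j (fun y => F y D) x l) ->
  HasD j (fun y => F y D) x (pd j F x D).
Proof. by case=> l Hl; exact: HasD_ex Hl. Qed.

Lemma HasD_Lj F i j x C : hpAll F x ->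
  HasD j (fun y => Lj i (F y) C) x (Lj i (pd j F x) C).
Proof.
move=> H; rewrite /Lj; apply: HasD_scal; exact: HasD_comp.
Qed.

Lemma HasD_vec g j x C : hpAll g x ->
  HasD j (fun y => cl_mul (vec y) (g y) C) x (Lj j (g x) C + cl_mul (vec x) (pd j g x) C).
Proof.
move=> H.
rewrite (_ : (fun y => cl_mul (vec y) (g y) C) =
             (fun y => \big[Rplus/0]_(k : 'I_m) (y k * Lj k (g y) C))); last first.
  by apply: functional_extensionality => y; rewrite vec_mul.
have E : Lj j (g x) C + cl_mul (vec x) (pd j g x) C =
   \big[Rplus/0]_(k : 'I_m) ((if k == j then 1 else 0) * Lj k (g x) C + x k * Lj k (pd j g x) C).
  rewrite bigR_add vec_mul; congr (_ + _).
  rewrite (bigD1 j) //= eqxx big1 ?Rplus_0_r; first ring.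
  by move=> k /negPf ->; ring.
rewrite E; apply: HasD_sum => k _; apply: HasD_mul; first exact: HasD_coord.
exact: HasD_Lj.
Qed.

Lemma HasD_dirac g k x C : (forall i, hpAll (pd i g) x) ->
  HasD k (fun y => dirac_l g y C) x (\big[Rplus/0]_(i : 'I_m) Lj i (pd k (pd i g) x) C).
Proof.
move=> H.
rewrite (_ : (fun y => dirac_l g y C) = (fun y => \big[Rplus/0]_(i : 'I_m) Lj i (pd i g y) C)); last first.
  by apply: functional_extensionality => y; rewrite diracE.
apply: HasD_sum => i _; exact: HasD_Lj.
Qed.

Lemma Lj_Lj i b C : Lj i (Lj i b) C = - b C.
Proof. have := Lj_anti i i b C; rewrite eqxx; lra. Qed.

Lemma dirac_vec g x C : hpAll g x ->
  dirac_l (fun y => cl_mul (vec y) (g y)) x C =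
  - INR m * g x C - 2 * euler g x C - cl_mul (vec x) (dirac_l g x) C.
Proof.
move=> H.
rewrite diracE.
have E1 : forall i, Lj i (pd i (fun y => cl_mul (vec y) (g y)) x) C =
   - g x C + \big[Rplus/0]_(k : 'I_m) (x k * Lj i (Lj k (pd i g x)) C).
  move=> i.
  rewrite (@Lj_ext m i _ (fun D => Lj i (g x) D + \big[Rplus/0]_(k : 'I_m) (x k * Lj k (pd i g x) D)) C); last first.
    move=> D; rewrite pdE (HasD_pdR (HasD_vec i D H)) vec_mul //.
  rewrite {1}/Lj Rmult_plus_distr_l -/(Lj i (Lj i (g x)) C) Lj_Lj; congr (_ + _).
  rewrite /Lj bigR_mull; apply: eq_bigr => k _; ring.
rewrite (eq_bigr _ (fun i _ => E1 i)) bigR_add.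
rewrite (eq_bigr (fun i => -1 * g x C)); last by move=> i _; ring.
rewrite -bigR_mull sumR_const.
have E2 : forall i k, x k * Lj i (Lj k (pd i g x)) C =
     - (x k * Lj k (Lj i (pd i g x)) C) + x k * ((if i == k then -2 else 0) * pd i g x C).
  move=> i k; have := Lj_anti i k (pd i g x) C; nra.
under eq_bigr => i _ do (under eq_bigr => k _ do rewrite E2; rewrite bigR_add).
rewrite bigR_add.
have E3 : \big[Rplus/0]_(i : 'I_m) \big[Rplus/0]_(k : 'I_m)
      (x k * ((if i == k then -2 else 0) * pd i g x C)) = - 2 * euler g x C.
  rewrite /euler bigR_mull; apply: eq_bigr => i _.
  rewrite (bigD1 i) //= eqxx big1 ?Rplus_0_r; first ring.
  by move=> k /negPf; rewrite eq_sym => ->; ring.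
rewrite E3.
have E4 : \big[Rplus/0]_(i : 'I_m) \big[Rplus/0]_(k : 'I_m) - (x k * Lj k (Lj i (pd i g x)) C)
   = - cl_mul (vec x) (dirac_l g x) C.
  rewrite vec_mul bigR_opp exchange_big; apply: eq_bigr => k _.
  rewrite -bigR_opp; congr (- _).
  rewrite (@Lj_ext m k _ (fun D => \big[Rplus/0]_(i : 'I_m) Lj i (pd i g x) D) C); last by move=> D; rewrite diracE.
  by rewrite Lj_sum bigR_mull.
rewrite E4; ring.
Qed.

End Ops.

Section Main1.
Variable m : nat.
Implicit Types (x y : pt m) (F G g f : pt m -> Cl m) (C D : {set 'I_m}) (O : pt m -> Prop).

Lemma Ck_hp k O F x : Ck k.+1 O F -> O x -> hpAll F x.
Proof.
move=> /Ck_CkR H Ox j D; have /= [_ [Hp _]] := H D; exact: Hp.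
Qed.
Lemma Ck_pd k O F j : Ck k.+1 O F -> Ck k O (pd j F).
Proof. by move=> /= [_ [_ H]]. Qed.
Lemma Ck2_hp2 O F x : Ck 2 O F -> O x -> forall i, hpAll (pd i F) x.
Proof. move=> H Ox i; apply: Ck_hp Ox; exact: Ck_pd H. Qed.
Lemma smooth_Ck k O F : smooth_on O F -> Ck k O F.
Proof. by move=> H; apply: H. Qed.

Lemma Ck_vec k O g : is_open O -> (forall C, CkR k O (fun y => g y C)) ->
  forall C, CkR k O (fun y => cl_mul (vec y) (g y) C).
Proof.
move=> Oo H C.
rewrite (_ : (fun y => cl_mul (vec y) (g y) C) =
             (fun y => \big[Rplus/0]_(k : 'I_m) (y k * (sg k (T k C) * g y (T k C))))); last first.
  by apply: functional_extensionality => y; rewrite vec_mul.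
apply: CkR_sum => // i _; apply: CkR_mul; [exact: Oo | exact: CkR_coord | ].
apply: CkR_mul; [exact: Oo | exact: CkR_const | exact: H].
Qed.

Lemma pd_unique O F j x D l : is_open O -> O x -> HasD j (fun y => F y D) x l -> pd j F x D = l.
Proof. by move=> _ _ H; rewrite pdE; exact: HasD_pdR. Qed.

Lemma mono_laplace O f x : is_open O -> Ck 2 O f ->
  (forall y, O y -> forall A, dirac_l f y A = 0) -> O x -> forall C, laplace f x C = 0.
Proof.
move=> Oo Hf Hd Ox C.
have hp2 := Ck2_hp2 Hf Ox.
have key : forall i D, \big[Rplus/0]_(j : 'I_m) Lj j (pd i (pd j f) x) D = 0.
  move=> i D.
  have H1 := HasD_dirac i D hp2.
  have H0 : HasD i (fun y => dirac_l f y D) x 0.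
    apply: (HasD_local Oo Ox (g := fun _ => 0)); first by move=> y Oy; exact: Hd.
    exact: HasD_const.
  by rewrite -(HasD_pdR H1) (HasD_pdR H0).
have sym : forall i j D, pd i (pd j f) x D = pd j (pd i f) x D.
  move=> i j D; rewrite !pdE.
  have H2 : CkR 2 O (fun y => f y D) by move: Hf => /Ck_CkR; apply.
  exact: (schwarz i j Oo H2 Ox).
have := @dirac_sq m (fun i j => pd i (pd j f) x) C sym.
rewrite (_ : \big[Rplus/0]_(i : 'I_m) \big[Rplus/0]_(j : 'I_m) Lj i (Lj j (pd i (pd j f) x)) C = 0).
  rewrite /laplace; lra.
apply: bigR0 => i _; rewrite -Lj_sum; apply: Lj_zero => D; exact: key.
Qed.

Lemma dirac_r_local O F G x C : is_open O -> O x ->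
  (forall y, O y -> forall D, F y D = G y D) -> hpAll G x ->
  dirac_r F x C = dirac_r G x C.
Proof.
move=> Oo Ox E H; apply: eq_bigr => j _.
rewrite (_ : pd j F x = pd j G x) //; apply: functional_extensionality => D.
rewrite !pdE; apply: HasD_pdR.
apply: (HasD_local Oo Ox (g := fun y => G y D)); first by move=> y Oy; exact: E.
exact: HasD_comp.
Qed.

Lemma diracR O g x a C : is_open O -> Ck 2 O g -> O x ->
  dirac_r (fun y D => a * dirac_l g y D) x C = a * dirac_lr g x C.
Proof.
move=> Oo Hg Ox.
have hp2 := Ck2_hp2 Hg Ox.
have E : forall j, pd j (fun y D => a * dirac_l g y D) x =
   (fun D => \big[Rplus/0]_(i : 'I_m) (a * cl_mul (cl_e i) (pd i (pd j g) x) D)).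
  move=> j; apply: functional_extensionality => D.
  rewrite pdE (HasD_pdR (HasD_scal a (HasD_dirac j D hp2))) bigR_mull.
  apply: eq_bigr => i _; rewrite cl_mul_e; congr (_ * _).
  apply: Lj_ext => D'; rewrite !pdE.
  have H2 : CkR 2 O (fun y => g y D') by move: Hg => /Ck_CkR; apply.
  exact: (schwarz j i Oo H2 Ox).
rewrite /dirac_r /dirac_lr (eq_bigr _ (fun j _ => congr1 (fun b => cl_mul b (cl_e j) C) (E j))).
under eq_bigr => j _ do rewrite cl_mul_suml.
rewrite exchange_big bigR_mull; apply: eq_bigr => i _; by rewrite bigR_mull.
Qed.

Lemma cl_mul_vec0 x b C : (forall D, b D = 0) -> cl_mul (vec x) b C = 0.
Proof. move=> H; rewrite vec_mul; apply: bigR0 => k _; rewrite Lj_zero //; ring. Qed.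

Lemma hp_vec g x : hpAll g x -> hpAll (fun y => cl_mul (vec y) (g y)) x.
Proof. move=> H j D; eexists; exact: HasD_vec. Qed.

Lemma dirac_add F G x C : hpAll F x -> hpAll G x ->
  dirac_l (fun y D => F y D + G y D) x C = dirac_l F x C + dirac_l G x C.
Proof.
move=> HF HG; rewrite !diracE -bigR_add; apply: eq_bigr => i _.
rewrite (@Lj_ext m i _ (fun D => pd i F x D + pd i G x D) C); first by rewrite /Lj; ring.
move=> D; rewrite pdE; apply: HasD_pdR; apply: HasD_add; exact: HasD_comp.
Qed.

End Main1.

Lemma smooth_comp m (O : pt m -> Prop) (F : pt m -> Cl m) k C : smooth_on O F -> CkR k O (fun y => F y C).
Proof. by move=> H; move: (H k) => /Ck_CkR; apply. Qed.

Lemma part1 m :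
  (forall (O : pt m -> Prop) (f1 f2 : pt m -> Cl m),
     is_domain O -> starlike0 O ->
     left_monogenic O f1 -> left_monogenic O f2 ->
     let h := fun x => cl_add (f1 x) (cl_mul (vec x) (f2 x)) in
     harmonic O h /\
     (forall x, O x -> forall A,
        dirac_l h x A = - INR m * f2 x A - 2 * euler f2 x A) /\
     (inframonogenic O h <->
      right_monogenic O (fun x A => INR m * f2 x A + 2 * euler f2 x A))).
Proof.
move=> O f1 f2 [Oo _] _ [S1 D1] [S2 D2] h.
have Sh : forall k, Ck k O h.
  move=> k; apply/Ck_CkR => C.
  change (CkR k O (fun y => f1 y C + cl_mul (vec y) (f2 y) C)).
  apply: CkR_add => //; first exact: smooth_comp.
  apply: Ck_vec => // D; exact: smooth_comp.
have hp1 : forall x, O x -> hpAll f1 x by move=> x Ox; exact: (Ck_hp (S1 1%N) Ox).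
have hp2 : forall x, O x -> hpAll f2 x by move=> x Ox; exact: (Ck_hp (S2 1%N) Ox).
have DF : forall x, O x -> forall A, dirac_l h x A = - INR m * f2 x A - 2 * euler f2 x A.
  move=> x Ox A.
  rewrite (_ : h = fun y D => f1 y D + cl_mul (vec y) (f2 y) D) //.
  rewrite dirac_add; [|exact: hp1|exact: hp_vec (hp2 x Ox)].
  rewrite D1 // dirac_vec; last exact: hp2.
  rewrite cl_mul_vec0; last by move=> D; exact: D2.
  ring.
split.
  split; first exact: Sh.
  move=> x Ox C.
  have h21 := Ck2_hp2 (S1 2%N) Ox; have h22 := Ck2_hp2 (S2 2%N) Ox.
  have Ej : forall j, pd j (pd j h) x C = pd j (pd j f1) x C +
      (Lj j (pd j f2 x) C + (Lj j (pd j f2 x) C + cl_mul (vec x) (pd j (pd j f2) x) C)).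
    move=> j; rewrite pdE; apply: HasD_pdR.
    apply: (HasD_local Oo Ox (g := fun y => pd j f1 y C + (Lj j (f2 y) C + cl_mul (vec y) (pd j f2 y) C))).
      move=> y Oy; rewrite pdE; apply: HasD_pdR.
      apply: HasD_add; first exact: HasD_comp (hp1 y Oy j C).
      exact: HasD_vec (hp2 y Oy).
    apply: HasD_add; first exact: HasD_comp (h21 j j C).
    apply: HasD_add; first exact: HasD_Lj (hp2 x Ox).
    exact: HasD_vec (h22 j).
  rewrite /laplace (eq_bigr _ (fun j _ => Ej j)) !bigR_add.
  have L1 := mono_laplace Oo (S1 2%N) D1 Ox C.
  have L2 := mono_laplace Oo (S2 2%N) D2 Ox.
  have Z1 : \big[Rplus/0]_(j : 'I_m) Lj j (pd j f2 x) C = 0.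
    by rewrite -diracE; exact: D2.
  have Z2 : \big[Rplus/0]_(j : 'I_m) cl_mul (vec x) (pd j (pd j f2) x) C = 0.
    under eq_bigr => j _ do rewrite vec_mul.
    rewrite exchange_big; apply: bigR0 => k _.
    rewrite -bigR_mull -Lj_sum Lj_zero; first ring.
    exact: L2.
  rewrite /laplace in L1; rewrite L1 Z1 Z2; ring.
split; first exact: DF.
set FF := fun x A => INR m * f2 x A + 2 * euler f2 x A.
have EqF : forall x, O x -> dirac_r FF x =1 (fun C => -1 * dirac_lr h x C).
  move=> x Ox C.
  have h2 := Ck2_hp2 (Sh 2%N) Ox.
  rewrite (@dirac_r_local m O FF (fun y D => -1 * dirac_l h y D) x C Oo Ox).
  - exact: diracR Oo (Sh 2%N) Ox.
  - move=> y Oy D; rewrite /FF DF //; ring.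
  - move=> j D; eexists; exact: HasD_scal (HasD_dirac j D h2).
have SF : smooth_on O FF.
  move=> k; apply/Ck_CkR => C; rewrite /FF /euler.
  apply: CkR_add => //; first by apply: CkR_mul => //; [exact: CkR_const|exact: smooth_comp].
  apply: CkR_mul => //; first exact: CkR_const.
  apply: CkR_sum => // j _; apply: CkR_mul => //; first exact: CkR_coord.
  have := smooth_comp k.+1 C S2 => H; exact: CkR_pd H.
split.
  case=> _ Hi; split => // x Ox A; rewrite EqF // Hi //; ring.
case=> _ Hr; split; first exact: Sh.
move=> x Ox A; have := EqF x Ox A; rewrite Hr //; lra.
Qed.

Lemma INR_sum (I : Type) (r : seq I) (F : I -> nat) :
  INR (\sum_(i <- r) F i)%N = \big[Rplus/0]_(i <- r) INR (F i).
Proof.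
elim: r => [|a r IH]; first by rewrite !big_nil.
by rewrite !big_cons -IH; apply: plus_INR.
Qed.

Section Poly.
Variable m : nat.
Implicit Types (x y : pt m) (g : pt m -> R) (a : 'I_m -> nat).

Definition mono a x := \big[Rmult/1]_(i : 'I_m) (x i ^ a i).
Definition decr a j := fun i => if i == j then (a i).-1 else a i.
Definition incr a j := fun i => if i == j then (a i).+1 else a i.

Lemma whole_open : is_open (@whole_space m).
Proof. by move=> x _; exists 1; split => //; lra. Qed.

Lemma hom_form k g : hom_poly_R k g -> exists s : seq (R * ('I_m -> nat)),
  all (fun p => (\sum_(i : 'I_m) p.2 i)%N == k) s /\
  g = (fun x => \big[Rplus/0]_(p <- s) (p.1 * mono p.2 x)).
Proof.
case=> s [Hs E]; exists s; split => //; by apply: functional_extensionality.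
Qed.

Lemma mono_smooth n a : CkR n (@whole_space m) (mono a).
Proof.
rewrite /mono; apply: CkR_prod; first exact: whole_open.
move=> i; apply: CkR_pow; first exact: whole_open.
apply: CkR_coord; exact: whole_open.
Qed.

Lemma hom_smooth k g n : hom_poly_R k g -> CkR n (@whole_space m) g.
Proof.
case/hom_form => s [_ ->]; apply: CkR_sum; first exact: whole_open.
move=> p _; apply: CkR_mul; first exact: whole_open.
  apply: CkR_const; exact: whole_open.
exact: mono_smooth.
Qed.

Lemma hom_ext k f g : hom_poly_R k f -> (forall x, f x = g x) -> hom_poly_R k g.
Proof. case=> s [Hs E] H; exists s; split => // x; by rewrite -H. Qed.

Lemma hom0 k : hom_poly_R k (fun _ : pt m => 0).
Proof. by exists [::]; split => // x; rewrite big_nil. Qed.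

Lemma hom_add k f g : hom_poly_R k f -> hom_poly_R k g -> hom_poly_R k (fun x => f x + g x).
Proof.
case=> s [Hs E] [t [Ht E']]; exists (s ++ t); split; first by rewrite all_cat Hs Ht.
by move=> x; rewrite big_cat E E'.
Qed.

Lemma hom_scal k c g : hom_poly_R k g -> hom_poly_R k (fun x => c * g x).
Proof.
case=> s [Hs E]; exists [seq (c * p.1, p.2) | p <- s]; split.
  by rewrite all_map; apply: sub_all Hs => p.
move=> x; rewrite E big_map bigR_mull; apply: eq_bigr => p _ /=; ring.
Qed.

Lemma hom_sum k (I : Type) (r : seq I) (F : I -> pt m -> R) :
  (forall i, hom_poly_R k (F i)) -> hom_poly_R k (fun x => \big[Rplus/0]_(i <- r) F i x).
Proof.
move=> H; elim: r => [|a r IH].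
  apply: hom_ext (hom0 k) _ => x; by rewrite big_nil.
apply: hom_ext (hom_add (H a) IH) _ => x; by rewrite big_cons.
Qed.

Lemma mono_upd a j x t : mono a (upd x j t) =
  t ^ a j * \big[Rmult/1]_(i : 'I_m | i != j) (x i ^ a i).
Proof.
rewrite /mono (bigD1 j) //= upd_same; congr (_ * _).
apply: eq_bigr => i ne; by rewrite upd_other.
Qed.

Lemma mono_decr a j x : mono (decr a j) x =
  x j ^ (a j).-1 * \big[Rmult/1]_(i : 'I_m | i != j) (x i ^ a i).
Proof.
rewrite /mono (bigD1 j) //= /decr eqxx; congr (_ * _).
apply: eq_bigr => i /negPf ne; by rewrite ne.
Qed.

Lemma mono_incr a j x : mono (incr a j) x = x j * mono a x.
Proof.
rewrite /mono (bigD1 j) //= (bigD1 j (P := xpredT)) //= /incr eqxx /= Rmult_assoc; congr (_ * (_ * _)).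
apply: eq_bigr => i /negPf ne; by rewrite ne.
Qed.

Lemma HasD_mono a j x : HasD j (mono a) x (INR (a j) * mono (decr a j) x).
Proof.
constructor.
rewrite (_ : (fun t => mono a (upd x j t)) =
   (fun t => t ^ a j * \big[Rmult/1]_(i : 'I_m | i != j) (x i ^ a i))); last first.
  by apply: functional_extensionality => t; rewrite mono_upd.
rewrite mono_decr -Rmult_assoc.
have := derivable_pt_lim_mult _ _ (x j) _ _ (derivable_pt_lim_pow (x j) (a j))
   (derivable_pt_lim_const (\big[Rmult/1]_(i : 'I_m | i != j) (x i ^ a i)) (x j)).
rewrite /mult_fct /fct_cte Rmult_0_r Rplus_0_r; done.
Qed.

Lemma x_mono_decr a j x : x j * (INR (a j) * mono (decr a j) x) = INR (a j) * mono a x.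
Proof.
case E: (a j) => [|n]; first by rewrite /= !Rmult_0_l Rmult_0_r.
rewrite mono_decr [mono a x]/mono (bigD1 j (P:=xpredT)) // E (_ : (n.+1).-1 = n) // -tech_pow_Rmult; move: (INR n.+1) (x j ^ n) => c q /=; rewrite -!Rmult_assoc (Rmult_comm (x j) c); reflexivity.
Qed.

Lemma pd_poly (s : seq (R * ('I_m -> nat))) j x :
  pdR j (fun x => \big[Rplus/0]_(p <- s) (p.1 * mono p.2 x)) x =
  \big[Rplus/0]_(p <- s) (p.1 * (INR (p.2 j) * mono (decr p.2 j) x)).
Proof.
apply: HasD_pdR; apply: HasD_sum => p _; apply: HasD_scal; exact: HasD_mono.
Qed.

Lemma sum_decr (p : R * ('I_m -> nat)) j k : (\sum_(i : 'I_m) p.2 i)%N == k -> (0 < p.2 j)%N ->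
  (\sum_(i : 'I_m) decr p.2 j i)%N == k.-1.
Proof.
move=> /eqP <- pj.
rewrite (bigD1 j) //= (bigD1 j (P := xpredT)) //= /decr eqxx.
rewrite (eq_bigr (fun i => p.2 i)); last by move=> i /negPf ->.
by rewrite -{2}(prednK pj) addSn.
Qed.

Lemma hom_pd k g j : hom_poly_R k g -> hom_poly_R k.-1 (pdR j g).
Proof.
move=> Hg.
case/hom_form: (Hg) => s [Hs Eg].
exists [seq (p.1 * INR (p.2 j), decr p.2 j) | p <- s & (0 < p.2 j)%N]; split.
  elim: s Hs {Eg} => [|p s IH] //= /andP [Hp Hs]; case: ifP => pj /=; last exact: IH.
  by rewrite IH // andbT; apply: sum_decr.
move=> x; rewrite Eg pd_poly big_map big_filter [RHS]big_mkcond.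
apply: eq_bigr => p _ /=; case: (p.2 j) => [|n] /=; first by rewrite Rmult_0_l Rmult_0_r.
rewrite Rmult_assoc; reflexivity.
Qed.

Lemma euler_mono (p : R * ('I_m -> nat)) k x : (\sum_(i : 'I_m) p.2 i)%N == k ->
  \big[Rplus/0]_(j : 'I_m) (x j * (p.1 * (INR (p.2 j) * mono (decr p.2 j) x))) = INR k * (p.1 * mono p.2 x).
Proof.
move=> /eqP <-; rewrite INR_sum bigR_mulr; apply: eq_bigr => j _.
have := x_mono_decr p.2 j x; move: (mono (decr p.2 j) x) (mono p.2 x) (INR (p.2 j)) => u v w H.
rewrite -(Rmult_assoc (x j)) (Rmult_comm (x j)) Rmult_assoc H; ring.
Qed.

Lemma hom_euler k g x : hom_poly_R k g ->
  \big[Rplus/0]_(j : 'I_m) (x j * pdR j g x) = INR k * g x.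
Proof.
case/hom_form => s [Hs ->].
rewrite (eq_bigr (fun j : 'I_m => \big[Rplus/0]_(p <- s) (x j * (p.1 * (INR (p.2 j) * mono (decr p.2 j) x)))));
  last by move=> j _; rewrite pd_poly bigR_mull.
rewrite exchange_big bigR_mull.
elim: s Hs => [|p s IH] /=; first by rewrite !big_nil.
move=> /andP [Hp Hs]; rewrite !big_cons IH // (euler_mono x Hp) //.
Qed.

Lemma hom_coord k g j : hom_poly_R k g -> hom_poly_R k.+1 (fun x => x j * g x).
Proof.
case/hom_form => s [Hs ->].
exists [seq (p.1, incr p.2 j) | p <- s]; split.
  elim: s Hs => [|p s IH] //= /andP [Hp Hs]; rewrite IH // andbT.
  move: Hp => /eqP <-.
  rewrite (bigD1 j) //= (bigD1 j (P := xpredT)) //= /incr eqxx.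
  rewrite (eq_bigr (fun i => p.2 i)); last by move=> i /negPf ->.
  by rewrite addSn.
move=> x; rewrite big_map bigR_mull; apply: eq_bigr => p _ /=; rewrite -[\big[Rmult/1]_(i : 'I_m) _]/(mono (incr p.2 j) x) mono_incr.
move: (mono p.2 x) => u; ring.
Qed.

End Poly.

Section P2.
Variable m : nat.
Implicit Types (x y : pt m) (F G g f : pt m -> Cl m) (C D : {set 'I_m}) (O : pt m -> Prop).

Lemma dirac_scal F x a C : hpAll F x ->
  dirac_l (fun y D => a * F y D) x C = a * dirac_l F x C.
Proof.
move=> HF; rewrite !diracE bigR_mull; apply: eq_bigr => i _.
rewrite (@Lj_ext m i _ (fun D => a * pd i F x D) C); first by rewrite /Lj; ring.
move=> D; rewrite pdE; apply: HasD_pdR; apply: HasD_scal; exact: HasD_comp.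
Qed.

Lemma dirac_dirac O g x a C : is_open O -> Ck 2 O g -> O x ->
  dirac_l (fun y D => a * dirac_l g y D) x C = - a * laplace g x C.
Proof.
move=> Oo Hg Ox.
have hp2 := Ck2_hp2 Hg Ox.
rewrite dirac_scal; last by move=> j D; eexists; exact: (HasD_dirac j D hp2).
rewrite diracE.
rewrite (eq_bigr (fun i : 'I_m => \big[Rplus/0]_(j : 'I_m) Lj i (Lj j (pd i (pd j g) x)) C)); last first.
  move=> i _; rewrite -Lj_sum; apply: Lj_ext => D.
  by rewrite pdE (HasD_pdR (HasD_dirac i D hp2)).
have sym : forall i j D, pd i (pd j g) x D = pd j (pd i g) x D.
  move=> i j D; rewrite !pdE.
  have H2 : CkR 2 O (fun y => g y D) by move: Hg => /Ck_CkR; apply.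
  exact: (schwarz i j Oo H2 Ox).
rewrite (@dirac_sq m (fun i j => pd i (pd j g) x) C sym) /laplace; ring.
Qed.

Lemma hom_smoothCl d F : hom_poly d F -> smooth_on (@whole_space m) F.
Proof. move=> H n; apply/Ck_CkR => C; exact: hom_smooth (H C). Qed.

End P2.

Lemma part2 m :
  (forall (k : nat) (h : pt m -> Cl m),
     (1 <= k)%N -> hom_poly k h ->
     harmonic (@whole_space m) h -> inframonogenic (@whole_space m) h ->
     exists f1 f2 : pt m -> Cl m,
       hom_poly k f1 /\ left_monogenic (@whole_space m) f1 /\
       hom_poly k.-1 f2 /\ left_monogenic (@whole_space m) f2 /\
       right_monogenic (@whole_space m) f2 /\
       forall x A, h x A = cl_add (f1 x) (cl_mul (vec x) (f2 x)) A).
Proof.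
case: m => [|m] k h k1 Hh [_ Hharm] [_ Hinf].
  exists h, (fun _ _ => 0).
  have H0 : hom_poly k.-1 (fun (_ : pt 0) (_ : {set 'I_0}) => 0) by move=> A; exact: hom0.
  split => //; split; first by split; [exact: hom_smoothCl Hh | move=> x _ A; rewrite /dirac_l big_ord0].
  split => //; split; first by split; [exact: hom_smoothCl H0 | move=> x _ A; rewrite /dirac_l big_ord0].
  split; first by split; [exact: hom_smoothCl H0 | move=> x _ A; rewrite /dirac_r big_ord0].
  move=> x A; rewrite /cl_add cl_mul_vec0 //; ring.
set c := INR m.+1 + 2 * (INR k - 1).
have cpos : 0 < c.
  have : 1 <= INR k by apply: (le_INR 1); apply/leP.
  have : 0 <= INR m by apply: pos_INR.
  rewrite /c S_INR; lra.
have Wo := @whole_open m.+1.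
have W : forall x : pt m.+1, whole_space x by [].
have Sh := hom_smoothCl Hh.
set f2 := fun y D => - / c * dirac_l h y D.
set f1 := fun y D => h y D + -1 * cl_mul (vec y) (f2 y) D.
have Hf2 : hom_poly k.-1 f2.
  move=> A.
  apply: hom_ext (hom_scal (- / c) (hom_sum (index_enum _)
     (fun j => hom_scal (sg j (T j A)) (hom_pd j (Hh (T j A)))))) _ => x.
  by rewrite /f2 diracE.
have Ek : k.-1.+1 = k by rewrite prednK.
have Hf1 : hom_poly k f1.
  move=> A.
  have H := fun j => hom_coord j (hom_scal (sg j (T j A)) (Hf2 (T j A))).
  rewrite Ek in H.
  apply: hom_ext (hom_add (Hh A) (hom_scal (-1) (hom_sum (index_enum _) H))) _ => x.
  by rewrite /f1 vec_mul.
have Sf2 := hom_smoothCl Hf2; have Sf1 := hom_smoothCl Hf1.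
have Dh2 : forall x, hpAll f2 x by move=> x; exact: (Ck_hp (Sf2 1%N) (W x)).
have Dhh : forall x, hpAll h x by move=> x; exact: (Ck_hp (Sh 1%N) (W x)).
have D2 : forall x A, dirac_l f2 x A = 0.
  move=> x A; rewrite /f2 (dirac_dirac _ _ Wo (Sh 2%N) (W x)) Hharm //; ring.
exists f1, f2; split => //; split.
  split => // x _ C.
  rewrite /f1 dirac_add //; last first.
    move=> j D; eexists; apply: HasD_scal; exact: HasD_vec (Dh2 x).
  rewrite dirac_scal; last exact: hp_vec (Dh2 x).
  rewrite dirac_vec // cl_mul_vec0 //.
  have Eu : euler f2 x C = INR k.-1 * f2 x C by rewrite /euler (hom_euler x (Hf2 C)).
  rewrite Eu (_ : INR k.-1 = INR k - 1); last by rewrite -{2}Ek S_INR; ring.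
  rewrite /f2 /c; field; rewrite -/c; lra.
split => //; split; first by split.
split; first split => // x _ C.
  rewrite /f2 (diracR _ _ Wo (Sh 2%N) (W x)) Hinf //; ring.
move=> x A; rewrite /cl_add /f1; ring.
Qed.

Unset Implicit Arguments.
Theorem mainTheorem7 (m : nat) :
  (forall (O : pt m -> Prop) (f1 f2 : pt m -> Cl m),
     is_domain O -> starlike0 O ->
     left_monogenic O f1 -> left_monogenic O f2 ->
     let h := fun x => cl_add (f1 x) (cl_mul (vec x) (f2 x)) in
     harmonic O h /\
     (forall x, O x -> forall A,
        dirac_l h x A = - INR m * f2 x A - 2 * euler f2 x A) /\
     (inframonogenic O h <->
      right_monogenic O (fun x A => INR m * f2 x A + 2 * euler f2 x A)))
  /\
  (forall (k : nat) (h : pt m -> Cl m),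
     (1 <= k)%N -> hom_poly k h ->
     harmonic (@whole_space m) h -> inframonogenic (@whole_space m) h ->
     exists f1 f2 : pt m -> Cl m,
       hom_poly k f1 /\ left_monogenic (@whole_space m) f1 /\
       hom_poly k.-1 f2 /\ left_monogenic (@whole_space m) f2 /\
       right_monogenic (@whole_space m) f2 /\
       forall x A, h x A = cl_add (f1 x) (cl_mul (vec x) (f2 x)) A).
Proof.
split; [exact: part1 | exact: part2].
Qed.
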